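(* Let $a,b,c$ be integers with $a,b,c>1$ and let $$M=\begin{pmatrix} a & b\\ c & 1\end{pmatrix}.$$ Then $\mathrm{Cat}(M)\neq\emptyset$ if and only if $a-bc>0$.
   Context: For an $n\times n$ matrix $M=(m_{ij})$ with entries in the natural numbers, $\mathrm{Cat}(M)$ denotes the collection of categories $A$ with exactly $n$ distinct objects $x_1,\dots,x_n$ such that $|A(x_i,x_j)|=m_{ij}$ for all $i,j$, where $A(x_i,x_j)$ is the set of morphisms from $x_i$ to $x_j$. One says $M$ ''works'' if $\mathrm{Cat}(M)\neq\emptyset$. *)

(* Defs.v *)
From mathcomp Require Import all_boot all_algebra.
Set Implicit Arguments. Unset Strict Implicit. Unset Printing Implicit Defensive.

Record category (n : nat) := Category {
  hom : 'I_n -> 'I_n -> finType;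
  idm : forall i, hom i i;
  comp : forall i j k, hom j k -> hom i j -> hom i k;
  comp_id_l : forall i j (f : hom i j), comp (idm j) f = f;
  comp_id_r : forall i j (f : hom i j), comp f (idm i) = f;
  comp_assoc : forall i j k l (h : hom k l) (g : hom j k) (f : hom i j),
      comp h (comp g f) = comp (comp h g) f
}.

(* Cat(M) is nonempty: some category with objects x_1..x_n has |A(x_i,x_j)| = m_ij *)
Definition works (n : nat) (M : 'M[nat]_n) : Prop :=
  exists C : category n, forall i j : 'I_n, #|hom C i j| = M i j.

Definition mat2 (a b c d : nat) : 'M[nat]_2 :=
  \matrix_(i < 2, j < 2)
    if (nat_of_ord i == 0)%N then (if (nat_of_ord j == 0)%N then a else b)
    else (if (nat_of_ord j == 0)%N then c else d).

(* Main.v *)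
Require Import Defs.
From mathcomp Require Import all_boot all_algebra.

Section Constr.
Variables (b' c' e : nat).
Notation B := 'I_b'.+1.
Notation C := 'I_c'.+1.
Definition XT : finType := ((C * B) + 'I_e)%type.
Definition pi (u : XT) : C * B :=
  match u with inl p => p | inr _ => (ord0, ord0) end.

Definition homT (p q : bool) : finType :=
  match p, q with
  | true, true => option XT
  | true, false => B
  | false, true => C
  | false, false => unit
  end.

Definition idT (p : bool) : homT p p :=
  match p with true => (None : option XT) | false => tt end.

Definition compT (p q r : bool) : homT q r -> homT p q -> homT p r :=
  match p, q, r return homT q r -> homT p q -> homT p r with
  | true, true, true => fun (u v : option XT) =>
      match u, v with
      | None, _ => v
      | _, None => u
      | Some u', Some v' => Some (inl ((pi u').1, (pi v').2))
      end
  | true, true, false => fun (h : B) (v : option XT) =>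
      match v with None => h | Some v' => (pi v').2 end
  | true, false, true => fun (g : C) (f : B) => Some (inl (g, f))
  | true, false, false => fun _ (f : B) => f
  | false, true, true => fun (u : option XT) (g : C) =>
      match u with None => g | Some u' => (pi u').1 end
  | false, true, false => fun _ _ => tt
  | false, false, true => fun (g : C) _ => g
  | false, false, false => fun _ _ => tt
  end.

Arguments compT {p q r}.
Lemma compT_id_l p q (f : homT p q) : compT (idT q) f = f.
Proof. by case: p q f => [] [] //= [] // [] [] //. Qed.

Lemma compT_id_r p q (f : homT p q) : compT f (idT p) = f.
Proof. by case: p q f => [] [] //= [] // [] [] //. Qed.

Lemma compT_assoc p q r s (h : homT r s) (g : homT q r) (f : homT p q) :
  compT h (compT g f) = compT (compT h g) f.
Proof.
case: p q r s h g f => [] [] [] [] //= h g f;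
  repeat match goal with
  | x : option _ |- _ => case: x => [x|]
  | x : unit |- _ => case: x
  end => //=.
Qed.

Definition bi (i : 'I_2) := (nat_of_ord i == 0)%N.

Definition theCat : category 2 :=
  @Category 2 (fun i j => homT (bi i) (bi j)) (fun i => idT (bi i))
    (fun i j k => @compT (bi i) (bi j) (bi k))
    (fun i j f => @compT_id_l _ _ f) (fun i j f => @compT_id_r _ _ f)
    (fun i j k l h g f => @compT_assoc _ _ _ _ h g f).
End Constr.

Lemma theCat_works a b' c' e : a = ((b'.+1 * c'.+1) + e).+1 ->
  works (mat2 a b'.+1 c'.+1 1).
Proof.
move=> ->; exists (theCat b' c' e) => i j; rewrite mxE.
case: i => [[|[|//]] Hi]; case: j => [[|[|//]] Hj] /=.
- by rewrite card_option card_sum card_prod !card_ord mulnC.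
- by rewrite card_ord.
- by rewrite card_ord.
- by rewrite card_unit.
Qed.

Lemma works_lt a b c : (1 < b)%N -> (1 < c)%N ->
  works (mat2 a b c 1) -> (b * c < a)%N.
Proof.
move=> hb hc [C HC].
pose x : 'I_2 := ord0. pose y : 'I_2 := ord_max.
have Hxx : #|Defs.hom C x x| = a by rewrite HC mxE.
have Hxy : #|Defs.hom C x y| = b by rewrite HC mxE.
have Hyx : #|Defs.hom C y x| = c by rewrite HC mxE.
have Hyy : #|Defs.hom C y y| = 1 by rewrite HC mxE.
have Yeq : forall h h' : Defs.hom C y y, h = h'.
  move=> h h'; have /card_le1_eqP := eq_leq Hyy.
  by move=> /(_ h h' isT isT).
have [f1 [f2 [_ _ nf12]]] : exists f1 f2 : Defs.hom C x y, [/\ f1 \in predT, f2 \in predT & f1 != f2].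
  by apply/card_gt1P; rewrite Hxy.
have [g0 _] : exists g0 : Defs.hom C y x, true.
  have : (0 < #|Defs.hom C y x|)%N by rewrite Hyx ltnW.
  by case/card_gt0P => g _; exists g.
pose F (o : option (Defs.hom C y x * Defs.hom C x y)) : Defs.hom C x x :=
  match o with None => idm C x | Some (g, f) => Defs.comp g f end.
have Finj : injective F.
  have detf : forall (g : Defs.hom C y x) (f : Defs.hom C x y), f = Defs.comp f1 (Defs.comp g f).
    move=> g f; rewrite comp_assoc (Yeq (Defs.comp f1 g) (idm C y)).
    by rewrite comp_id_l.
  have detg : forall (g : Defs.hom C y x) (f : Defs.hom C x y), g = Defs.comp (Defs.comp g f) g0.
    move=> g f; rewrite -comp_assoc (Yeq (Defs.comp f g0) (idm C y)).
    by rewrite comp_id_r.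
  have noid : forall (g : Defs.hom C y x) (f : Defs.hom C x y), Defs.comp g f <> idm C x.
    move=> g f E; move/negP: nf12; apply; apply/eqP.
    have ff : forall f' : Defs.hom C x y, f' = f.
      move=> f'; rewrite -[f' in LHS]comp_id_r -E comp_assoc.
      by rewrite (Yeq (Defs.comp f' g) (idm C y)) comp_id_l.
    by rewrite (ff f1) (ff f2).
  move=> [[g f]|] [[g' f']|] //= E.
  - have -> : f = f' by rewrite (detf g f) E -detf.
    have -> : g = g' by rewrite (detg g f) E -detg.
    done.
  - by case: (noid _ _ E).
  - by case: (noid _ _ (esym E)).
have := leq_card F Finj.
by rewrite card_option card_prod Hxx Hyx Hxy mulnC.
Qed.

Theorem mainTheorem1 (a b c : nat) :
  (1 < a)%N -> (1 < b)%N -> (1 < c)%N ->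
  (works (mat2 a b c 1) <-> (b * c < a)%N).
Proof.
move=> ha hb hc; split; first exact: works_lt.
case: b hb => [|b'] // _; case: c hc => [|c'] // _ H.
apply: (@theCat_works a b' c' (a - (b'.+1 * c'.+1)).-1).
by rewrite -addnS prednK ?subn_gt0 // subnKC // ltnW.
Qed.
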